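(* Consider the lattice Boltzmann scheme on $\mathbb{Z}$ described in the context, with bulk operator $\hat{E}(\kappa)$. If the Finite Difference scheme generated by the characteristic polynomial $\det(zI_q-\hat{E}(\kappa))$ is $L^2$ stable (in the sense of the context), then the lattice Boltzmann scheme is $L^2$ stable (in the sense of the context). The converse implication is false in general: there exist lattice Boltzmann schemes of this form which are $L^2$ stable while the associated Finite Difference scheme is not.
   Context: Fix an integer $q\geq 2$, integer velocities $c_1,\dots,c_q\in\mathbb{Z}$, an invertible moment matrix $M\in\mathbb{R}^{q\times q}$, relaxation parameters $s_1\in\mathbb{R}$ and $s_2,\dots,s_q\in(0,2]$, and an equilibrium vector $\epsilon\in\mathbb{R}^q$ with $\epsilon_1=1$. Let $e_i$ denote the canonical basis vectors and set $K:=I_q+\mathrm{diag}(s_1,\dots,s_q)(\epsilon e_1^{\mathsf T}-I_q)$. For $\kappa\in\mathbb{C}\setminus\{0\}$ let $\hat{E}(\kappa):=M\,\mathrm{diag}(\kappa^{-c_1},\dots,\kappa^{-c_q})\,M^{-1}K=\sum_j E_j\kappa^j$, where $E_j:=\sum_{i:\,c_i=-j}Me_ie_i^{\mathsf T}M^{-1}K$. The lattice Boltzmann scheme on $\mathbb{Z}$ acts on moment vectors $m^n_j\in\mathbb{R}^q$ by $m^{n+1}_j=\sum_{k}E_k m^n_{j+k}$, $j\in\mathbb{Z}$, with space step $\Delta x>0$. It is called $L^2$ stable if there is $C>0$ such that for all $\Delta x>0$, all initial data $(m^0_j)_{j\in\mathbb{Z}}\in(\ell^2)^q$ and all $n\in\mathbb{N}$,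 $\sum_{j\in\mathbb{Z}}\Delta x|m^n_j|^2\leq C\sum_{j\in\mathbb{Z}}\Delta x|m^0_j|^2$ (any norm $|\cdot|$ on $\mathbb{R}^q$). Associated Finite Difference scheme: write $\det(zI_q-\hat{E}(\kappa))=z^q+\sum_{\ell=q-1-s}^{q-1}\gamma_\ell(\kappa)z^\ell$, where $s:=\#\{\ell\in\{2,\dots,q\}: s_\ell\neq 1\}$ and the $\gamma_\ell$ are Laurent polynomials in $\kappa$. The scalar scheme is $u^{n+1}_j=-\sum_{\ell=0}^{s}\gamma_{q-\ell-1}(\mathsf T)u^{n-\ell}_j$ for $n\geq s$, $j\in\mathbb{Z}$, where $\mathsf T$ is the forward shift $(\mathsf T u)_j=u_{j+1}$. It is called $L^2$ stable if there is $C>0$ such that for all $\Delta x>0$, all initial data $(u^0_j)_j,\dots,(u^{s-1}_j)_j\in\ell^2$ and all $n\in\mathbb{N}$, $\sum_{j}\Delta x|u^n_j|^2\leq C\sum_{\ell=0}^{s-1}\sum_j\Delta x|u^\ell_j|^2$. *)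

(* Defs.v *)
From HB Require Import structures.
From mathcomp Require Import all_boot all_order all_algebra.
From mathcomp Require Import all_classical all_reals all_analysis.
Set Implicit Arguments. Unset Strict Implicit. Unset Printing Implicit Defensive.
Import Order.TTheory GRing.Theory Num.Theory.
Local Open Scope ring_scope.

Section LBM.
Variable R : realType.
Variable q : nat.
Hypothesis hq : (1 < q)%N.

(* the first canonical index (index "1" of the paper) *)
Definition i0 : 'I_q := Ordinal (ltnW hq).

Definition nrm2 (v : 'cV[R]_q) : R := \sum_(i < q) (v i 0) ^+ 2.

Variables (c : 'I_q -> int) (M : 'M[R]_q) (s : 'I_q -> R) (eps : 'I_q -> R).

Definition Kmx : 'M[R]_q :=
  1%:M + diag_mx (\row_i s i) *m ((\col_i eps i) *m (delta_mx i0 0 : 'cV[R]_q)^T - 1%:M).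

Definition Emx (j : int) : 'M[R]_q :=
  \sum_(i < q | c i == - j) (M *m delta_mx i i *m invmx M *m Kmx).

(* N = max |c_i| : E_j = 0 whenever |j| > N *)
Definition Nmax : nat := (\max_(i < q) `|c i|%N)%N.

Definition lbm_step (m : int -> 'cV[R]_q) : int -> 'cV[R]_q :=
  fun j => \sum_(k < (Nmax + Nmax).+1)
              Emx (k%:Z - Nmax%:Z) *m m (j + (k%:Z - Nmax%:Z)).

Definition lbm_iter (n : nat) (m0 : int -> 'cV[R]_q) : int -> 'cV[R]_q :=
  iter n lbm_step m0.

Definition l2_vec (m : int -> 'cV[R]_q) : Prop :=
  (\esum_(j in [set: int]) (nrm2 (m j))%:E < +oo)%E.

Definition lbm_L2_stable : Prop :=
  exists C : R, 0 < C /\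
    forall (dx : R), 0 < dx -> forall m0 : int -> 'cV[R]_q, l2_vec m0 ->
    forall n : nat,
      (\esum_(j in [set: int]) (dx * nrm2 (lbm_iter n m0 j))%:E
        <= C%:E * \esum_(j in [set: int]) (dx * nrm2 (m0 j))%:E)%E.

(* Polynomial matrix P(X) = X^N Ehat(X) = sum_j E_j X^(j+N), entries in {poly R}. *)
Definition Ptil : 'M[{poly R}]_q :=
  \sum_(k < (Nmax + Nmax).+1) ('X^k *: map_mx polyC (Emx (k%:Z - Nmax%:Z))).

(* det(w I - P(X)) = sum_l a_l(X) w^l, and
   det(z I - Ehat(kappa)) = kappa^{-qN} det(kappa^N z I - P(kappa))
                          = sum_l kappa^{-N(q-l)} a_l(kappa) z^l,
   so gamma_l(kappa) = kappa^{-N(q-l)} a_l(kappa)  (a Laurent polynomial). *)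
Definition acoef (l : nat) : {poly R} := (char_poly Ptil)`_l.

Definition gammaT (l : nat) (u : int -> R) : int -> R :=
  fun j => \sum_(i < size (acoef l))
             (acoef l)`_i * u (j + (i%:Z - (Nmax * (q - l))%N%:Z)).

Definition snum : nat := #|[set i : 'I_q | (i != i0) && (s i != 1)]|.

Definition fd_solution (u : nat -> int -> R) : Prop :=
  forall n : nat, (snum <= n)%N -> forall j : int,
    u n.+1 j = - \sum_(l < snum.+1) gammaT (q - l - 1) (u (n - l)%N) j.

Definition l2_sc (u : int -> R) : Prop :=
  (\esum_(j in [set: int]) ((u j) ^+ 2)%:E < +oo)%E.

Definition fd_L2_stable : Prop :=
  exists C : R, 0 < C /\
    forall (dx : R), 0 < dx -> forall u : nat -> int -> R,
    (forall l : nat, (l <= snum)%N -> l2_sc (u l)) ->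
    fd_solution u ->
    forall n : nat,
      (\esum_(j in [set: int]) (dx * (u n j) ^+ 2)%:E
        <= C%:E * \sum_(l < snum.+1) \esum_(j in [set: int]) (dx * (u l j) ^+ 2)%:E)%E.

Definition lbm_hyps : Prop :=
  [/\ M \in unitmx,
      (forall i : 'I_q, i != i0 -> 0 < s i <= 2) &
      eps i0 = 1].

End LBM.

(* Main.v *)
Require Import Defs.
From HB Require Import structures.
From mathcomp Require Import all_boot all_order all_algebra.
From mathcomp Require Import all_classical all_reals all_analysis.
Set Implicit Arguments. Unset Strict Implicit. Unset Printing Implicit Defensive.
Import Order.TTheory GRing.Theory Num.Theory.
From mathcomp Require Import ring lra zify.
Local Open Scope ring_scope.

Section Pop.
Variable R : comNzRingType.

Definition pop (p : {poly R}) (u : int -> R) : int -> R :=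
  fun j => \sum_(i < size p) p`_i * u (j + i%:Z).

Lemma pop_wide n (p : {poly R}) (u : int -> R) j : (size p <= n)%N ->
  pop p u j = \sum_(i < n) p`_i * u (j + i%:Z).
Proof.
move=> hn; rewrite /pop (big_ord_widen n (fun i => p`_i * u (j + i%:Z))) //.
rewrite big_mkcond /=; apply: eq_bigr => i _.
by case: ifP => // /negbT; rewrite -leqNgt => /(nth_default 0) ->; rewrite mul0r.
Qed.

Lemma eq_pop (p : {poly R}) (u v : int -> R) j : (forall x, u x = v x) -> pop p u j = pop p v j.
Proof. by move=> e; apply: eq_bigr => i _; rewrite e. Qed.

Lemma pop0 (u : int -> R) j : pop 0 u j = 0.
Proof. by rewrite /pop size_poly0 big_ord0. Qed.

Lemma popD (p r : {poly R}) u j : pop (p + r) u j = pop p u j + pop r u j.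
Proof.
have h1 : (size p <= size p + size r)%N by apply: leq_addr.
have h2 : (size r <= size p + size r)%N by apply: leq_addl.
have h3 : (size (p + r)%R <= size p + size r)%N.
  by apply: leq_trans (size_polyD _ _) _; rewrite geq_max h1 h2.
rewrite (pop_wide u j h1) (pop_wide u j h2) (pop_wide u j h3) -big_split /=.
by apply: eq_bigr => i _; rewrite coefD mulrDl.
Qed.

Lemma popZ a (p : {poly R}) u j : pop (a *: p) u j = a * pop p u j.
Proof.
rewrite (pop_wide u j (size_scale_leq a p)) /pop mulr_sumr.
by apply: eq_bigr => i _; rewrite coefZ mulrA.
Qed.

Lemma pop_sum (I : eqType) (r : seq I) (P : pred I) (F : I -> {poly R}) u j :
  pop (\sum_(i <- r | P i) F i) u j = \sum_(i <- r | P i) pop (F i) u j.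
Proof.
elim: r => [|x r IH]; first by rewrite !big_nil pop0.
rewrite !big_cons; case: ifP => _ //; by rewrite popD IH.
Qed.

Lemma pop_sumu (p : {poly R}) (I : eqType) (r : seq I) (P : pred I) (f : I -> int -> R) j :
  pop p (fun x => \sum_(i <- r | P i) f i x) j = \sum_(i <- r | P i) pop p (f i) j.
Proof.
rewrite /pop; under eq_bigr do rewrite mulr_sumr.
by rewrite exchange_big.
Qed.

Lemma pop_shift (p : {poly R}) u t j : pop p (fun x => u (x + t)) j = pop p u (j + t).
Proof. by apply: eq_bigr => i _; rewrite addrAC. Qed.

Lemma pop_Xn n (r : {poly R}) u j : pop ('X^n * r) u j = pop r u (j + n%:Z).
Proof.
have h : (size ('X^n * r)%R <= n + size r)%N.
  apply: leq_trans (size_mul_leq _ _) _; rewrite size_polyXn addSn //.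
rewrite (pop_wide u j h) big_split_ord /= big1 ?add0r; last first.
  by move=> i _; rewrite coefXnM /= ltn_ord mul0r.
rewrite /pop; apply: eq_bigr => i _; rewrite coefXnM /= ltnNge leq_addr /=.
by rewrite addKn PoszD addrA.
Qed.

Lemma popM (p r : {poly R}) u j : pop (p * r) u j = pop p (pop r u) j.
Proof.
rewrite -{1}(coefK p) poly_def mulr_suml pop_sum /=.
rewrite [RHS]/pop; apply: eq_bigr => i _; rewrite -scalerAl popZ pop_Xn //.
Qed.

Lemma popXnC n (a : R) u j : pop ('X^n * a%:P) u j = a * u (j + n%:Z).
Proof.
rewrite mulrC mul_polyC popZ -[X in pop X]mulr1 pop_Xn /pop size_poly1 big_ord1.
by rewrite coefC /= mul1r addr0.
Qed.

Lemma pop1 (u : int -> R) j : pop 1 u j = u j.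
Proof. by rewrite /pop size_poly1 big_ord1 coefC /= mul1r addr0. Qed.

End Pop.

Section Mop.
Variable R : comNzRingType.
Variable n : nat.

Definition mcomp (m : int -> 'cV[R]_n) (b : 'I_n) : int -> R := fun x => m x b 0.

Definition mop (Q : 'M[{poly R}]_n) (m : int -> 'cV[R]_n) : int -> 'cV[R]_n :=
  fun j => \col_a \sum_b pop (Q a b) (mcomp m b) j.

Lemma mopE Q m j a : mop Q m j a 0 = \sum_b pop (Q a b) (mcomp m b) j.
Proof. by rewrite /mop mxE. Qed.

Lemma mopM (Q1 Q2 : 'M[{poly R}]_n) m j : mop (Q1 *m Q2) m j = mop Q1 (mop Q2 m) j.
Proof.
apply/colP => a; rewrite !mxE.
under eq_bigr do rewrite mxE pop_sum.
rewrite exchange_big /=; apply: eq_bigr => c _.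
rewrite (@eq_pop _ _ (mcomp (mop Q2 m) c) (fun x => \sum_b pop (Q2 c b) (mcomp m b) x)); last first.
  by move=> x; rewrite /mcomp mopE.
rewrite pop_sumu; apply: eq_bigr => b _; by rewrite popM.
Qed.

Lemma mopZ (p : {poly R}) (Q : 'M[{poly R}]_n) m j a :
  mop (p *: Q) m j a 0 = pop p (mcomp (mop Q m) a) j.
Proof.
rewrite mopE (@eq_pop _ _ (mcomp (mop Q m) a) (fun x => \sum_b pop (Q a b) (mcomp m b) x)); last first.
  by move=> x; rewrite /mcomp mopE.
rewrite pop_sumu; apply: eq_bigr => b _; by rewrite mxE popM.
Qed.

Lemma mop_sum (I : eqType) (r : seq I) (P : pred I) (F : I -> 'M[{poly R}]_n) m j a :
  mop (\sum_(i <- r | P i) F i) m j a 0 = \sum_(i <- r | P i) mop (F i) m j a 0.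
Proof.
rewrite mopE; under eq_bigr do rewrite summxE pop_sum.
rewrite exchange_big /=; apply: eq_bigr => i _; by rewrite mopE.
Qed.

Lemma mop0 m j a : mop 0 m j a 0 = 0.
Proof. by rewrite mopE big1 // => b _; rewrite mxE pop0. Qed.

Lemma mop1 m j : mop 1%:M m j = m j.
Proof.
apply/colP => a; rewrite mxE (bigD1 a) //= big1 ?addr0.
  by rewrite mxE eqxx pop1.
by move=> b /negbTE nb; rewrite mxE eq_sym nb pop0.
Qed.

End Mop.

Lemma cp_factor (T : idomainType) q r (A : 'M[T]_(q, r)) (B : 'M[T]_(r, q)) :
  (r <= q)%N -> char_poly (A *m B) = 'X^(q - r) * char_poly (B *m A).
Proof.
move=> rq.
set z : {poly T} := 'X.
set Ap := map_mx polyC A; set Bp := map_mx polyC B.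
have eAB : char_poly (A *m B) = \det (z%:M - Ap *m Bp).
  by rewrite /char_poly /char_poly_mx map_mxM.
have eBA : char_poly (B *m A) = \det (z%:M - Bp *m Ap).
  by rewrite /char_poly /char_poly_mx map_mxM.
pose N0 := block_mx (@scalar_mx _ q z) Ap Bp (@scalar_mx _ r 1).
pose L1 := block_mx (@scalar_mx _ q 1) (- Ap) 0 (@scalar_mx _ r z).
pose L2 := block_mx (@scalar_mx _ q 1) 0 (- Bp) (@scalar_mx _ r z).
have h1 : L1 *m N0 = block_mx (z%:M - Ap *m Bp) 0 (z *: Bp) (@scalar_mx _ r z).
  rewrite mulmx_block !mul1mx !mul0mx !add0r !mulmx1 mulNmx addrN.
  by rewrite mul_scalar_mx.
have h2 : L2 *m N0 = block_mx (@scalar_mx _ q z) Ap 0 (z%:M - Bp *m Ap).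
  rewrite mulmx_block !mul1mx !mul0mx !addr0 !mulmx1 mulNmx mul_scalar_mx.
  by rewrite mul_mx_scalar addNr [X in block_mx _ _ _ X]addrC mulNmx.
have d1 : \det (L1 *m N0) = z ^+ r * \det N0.
  by rewrite det_mulmx det_ublock det1 det_scalar mul1r.
have d2 : \det (L2 *m N0) = z ^+ r * \det N0.
  by rewrite det_mulmx det_lblock det1 det_scalar mul1r.
have e1 : \det (z%:M - Ap *m Bp) * z ^+ r = z ^+ r * \det N0.
  by rewrite -d1 h1 det_lblock det_scalar.
have e2 : z ^+ q * \det (z%:M - Bp *m Ap) = z ^+ r * \det N0.
  by rewrite -d2 h2 det_ublock det_scalar.
have : z ^+ r * char_poly (A *m B) = z ^+ r * ('X^(q - r) * char_poly (B *m A)).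
  by rewrite eAB eBA mulrC e1 -e2 mulrA -exprD subnKC.
apply: mulfI; apply: expf_neq0; by rewrite polyX_eq0.
Qed.

Section Alg.
Variable R : realType.
Variable q' : nat.
Local Notation q := q'.+1.
Variable hq : (1 < q)%N.
Variables (c : 'I_q -> int) (M : 'M[R]_q) (s : 'I_q -> R) (eps : 'I_q -> R).
Local Notation i0 := (i0 hq).
Local Notation K := (Kmx hq s eps).
Local Notation N := (Nmax c).

Lemma KmxE a b : K a b = (a == b)%:R + s a * (eps a * (b == i0)%:R - (a == b)%:R).
Proof.
rewrite /Kmx mxE mul_diag_mx !mxE big_ord1 !mxE /=.
by rewrite eqxx andbT.
Qed.


Definition Fmx (j : int) : 'M[R]_q :=
  \sum_(i < q | c i == - j) (M *m delta_mx i i *m invmx M).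

Lemma EmxF j : Emx hq c M s eps j = Fmx j *m K.
Proof. by rewrite /Emx /Fmx mulmx_suml. Qed.

Definition Gp : 'M[{poly R}]_q :=
  \sum_(k < (N + N).+1) ('X^k *: map_mx polyC (Fmx (k%:Z - N%:Z))).

Lemma PtilG : Ptil hq c M s eps = Gp *m map_mx polyC K.
Proof.
rewrite /Ptil /Gp mulmx_suml; apply: eq_bigr => k _.
by rewrite EmxF map_mxM scalemxAl.
Qed.

Definition Jset : {set 'I_q} := [set i : 'I_q | (i == i0) || (s i != 1)].

Lemma cardJ : #|Jset| = (snum hq s).+1.
Proof.
have -> : Jset = i0 |: [set i : 'I_q | (i != i0) && (s i != 1)].
  apply/setP => i; rewrite !inE; by case: (i == i0).
by rewrite cardsU1 !inE eqxx /=.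
Qed.

Lemma cardJq : (#|Jset| <= q)%N.
Proof. by have := max_card (mem Jset); rewrite card_ord. Qed.

Definition Xm : 'M[R]_(q, #|Jset|) :=
  \matrix_(a, k) (if a \in Jset then (a == enum_val k)%:R
                  else eps a * (enum_val k == i0)%:R).
Definition Ym : 'M[R]_(#|Jset|, q) := \matrix_(k, b) K (enum_val k) b.

Lemma Kfact : eps i0 = 1 -> K = Xm *m Ym.
Proof.
move=> he; apply/matrixP => a b; rewrite [RHS]mxE.
under eq_bigr do rewrite [Xm _ _]mxE [Ym _ _]mxE.
rewrite -(big_enum_val (A := pred_of_set Jset) (fun i => (if a \in Jset then (a == i)%:R
                  else eps a * (i == i0)%:R) * K i b)) /=.
case: (boolP (a \in Jset)) => Ha.
  rewrite (bigD1 a) //= eqxx mul1r big1 ?addr0 //.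
  by move=> i /andP [_ ne]; rewrite eq_sym (negbTE ne) mul0r.
have i0J : i0 \in Jset by rewrite inE eqxx.
rewrite (bigD1 i0) //= ?eqxx ?mulr1 big1 ?addr0; last first.
  by move=> i /andP [_ ne]; rewrite (negbTE ne) mulr0 mul0r.
move: Ha; rewrite inE negb_or negbK => /andP [na /eqP sa].
rewrite !KmxE he sa mul1r [i0 == b]eq_sym mul1r subrr mulr0 addr0.
by rewrite addrCA subrr addr0.
Qed.

Lemma acoef_vanish l : eps i0 = 1 -> (l < q - (snum hq s).+1)%N ->
  acoef hq c M s eps l = 0.
Proof.
move=> he hl; rewrite /acoef PtilG (Kfact he) map_mxM mulmxA cp_factor ?cardJq //.
by rewrite coefXnM ifT //; move: hl; rewrite cardJ.
Qed.

Lemma acoef_q : acoef hq c M s eps q = 1.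
Proof.
have := char_poly_monic (Ptil hq c M s eps).
by rewrite monicE /lead_coef size_char_poly => /eqP.
Qed.

Local Notation step := (lbm_step hq c M s eps).
Local Notation iterl := (lbm_iter hq c M s eps).

Lemma mopPtil m j : mop (Ptil hq c M s eps) m j = step m (j + N%:Z).
Proof.
apply/colP => a; rewrite mopE /lbm_step summxE.
under eq_bigr do rewrite summxE pop_sum.
rewrite exchange_big /=; apply: eq_bigr => k _.
rewrite mxE; apply: eq_bigr => b _.
rewrite !mxE popXnC /mcomp; congr (_ * m _ b 0); lia.
Qed.

Lemma step_shift m t j : step (fun x => m (x + t)) j = step m (j + t).
Proof. by apply: eq_bigr => k _; rewrite addrAC. Qed.

Lemma mop_pow l m j :
  mop (Ptil hq c M s eps ^+ l) m j = iterl l m (j + (N * l)%N%:Z).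
Proof.
elim: l j => [|l IH] j.
  by rewrite expr0 mop1 muln0 addr0.
rewrite exprS -mulmxE mopM mopPtil.
rewrite (_ : mop _ m = fun x => iterl l m (x + (N * l)%N%:Z)); last first.
  by apply: funext => x; rewrite IH.
rewrite step_shift /lbm_iter iterS; congr (step _ _); lia.
Qed.

End Alg.

Lemma horner_expand (T : comNzRingType) n (A : 'M[T]_n.+1) (p : {poly T}) :
  horner_mx A p = \sum_(i < size p) p`_i *: A ^+ i.
Proof.
rewrite -{1}(coefK p) poly_def linear_sum /=; apply: eq_bigr => i _.
by rewrite linearZ /= rmorphXn /= horner_mx_X.
Qed.

Lemma horner_expand_wide (T : comNzRingType) n (A : 'M[T]_n.+1) (p : {poly T}) k :
  (size p <= k)%N -> horner_mx A p = \sum_(i < k) p`_i *: A ^+ i.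
Proof.
move=> hk; rewrite horner_expand (big_ord_widen k (fun i => p`_i *: A ^+ i)) //.
rewrite big_mkcond /=; apply: eq_bigr => i _.
by case: ifP => // /negbT; rewrite -leqNgt => /(nth_default 0) ->; rewrite scale0r.
Qed.

Lemma idx_eq (j : int) (N q i t : nat) : (i <= q)%N ->
  j + (t%:Z - (N * (q - i))%N%:Z) = j - (N * q)%N%:Z + (N * i)%N%:Z + t%:Z.
Proof. move=> h; rewrite mulnBr; nia. Qed.

Section Rec.
Variable R : realType.
Variable q' : nat.
Local Notation q := q'.+1.
Variable hq : (1 < q)%N.
Variables (c : 'I_q -> int) (M : 'M[R]_q) (s : 'I_q -> R) (eps : 'I_q -> R).
Local Notation i0 := (i0 hq).
Local Notation N := (Nmax c).
Local Notation step := (lbm_step hq c M s eps).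
Local Notation iterl := (lbm_iter hq c M s eps).
Local Notation P := (Ptil hq c M s eps).
Local Notation gam := (gammaT hq c M s eps).

Lemma rec_all m a j : \sum_(i < q.+1) gam i (mcomp (iterl i m) a) j = 0.
Proof.
have CH := Cayley_Hamilton P.
rewrite (horner_expand_wide _ (k := q.+1)) ?size_char_poly // in CH.
have := congr1 (fun Q => mop Q m (j - (N * q)%N%:Z) a 0) CH.
rewrite /= mop0 mop_sum => e; rewrite -[in RHS]e.
apply: eq_bigr => i _; rewrite mopZ.
rewrite (@eq_pop _ _ _ (fun x => mcomp (iterl i m) a (x + (N * i)%N%:Z))); last first.
  by move=> x; rewrite /mcomp mop_pow.
rewrite pop_shift /pop /gammaT /acoef; apply: eq_bigr => t _.
have := ltn_ord i; rewrite ltnS => hi.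
rewrite /mcomp; congr (_ * iterl _ _ _ a 0); exact: idx_eq.
Qed.

Lemma gam_q u j : gam q u j = u j.
Proof.
by rewrite /gammaT acoef_q size_poly1 big_ord1 coefC /= mul1r subnn muln0 subrr addr0.
Qed.

Lemma snum_lt : ((snum hq s).+1 <= q)%N.
Proof. by rewrite -cardJ cardJq. Qed.

Lemma rec_fd m a j : eps i0 = 1 ->
  mcomp (iterl q m) a j =
  - \sum_(l < (snum hq s).+1) gam (q - l - 1) (mcomp (iterl (q - l - 1) m) a) j.
Proof.
move=> he.
have := rec_all m a j; rewrite big_ord_recr /= gam_q => /eqP.
rewrite addrC addr_eq0 => /eqP ->; congr (- _).
rewrite (reindex_inj rev_ord_inj) /=.
rewrite (big_ord_widen q (fun l => gam (q - l - 1) (mcomp (iterl (q - l - 1) m) a) j) snum_lt).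
rewrite (bigID (fun i : 'I_q => (i < (snum hq s).+1)%N)) /= [X in _ + X = _]big1 ?addr0.
  by apply: eq_bigr => i _; rewrite subnS subn1.
move=> i hi; rewrite /gammaT acoef_vanish //; first by rewrite size_poly0 big_ord0.
have := ltn_ord i; move: hi; rewrite -leqNgt => hi hiq; lia.
Qed.

End Rec.

Section EsumLemmas.
Variable R : realType.
Local Open Scope ereal_scope.

Lemma esumZ (T : choiceType) (S : set T) (r : R) (a : T -> \bar R) :
  (0 <= r)%R -> (forall i, 0 <= a i) ->
  \esum_(i in S) (r%:E * a i) = r%:E * \esum_(i in S) a i.
Proof.
move=> r0 a0; rewrite /esum -ereal_supZl //; last first.
  by apply/set0P; exists 0; exists set0; [exact: fsets_set0 | rewrite fsbig_set0].
congr ereal_sup; apply/seteqP; split => x /=.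
  move=> [A hA <-]; exists (\sum_(i \in A) a i); first by exists A.
  by rewrite ge0_mule_fsumr.
move=> [y [A hA <-] <-]; exists A => //; by rewrite ge0_mule_fsumr.
Qed.

Lemma esum_shift (a : int -> \bar R) (t : int) :
  \esum_(j in [set: int]) a (j + t)%R = \esum_(j in [set: int]) a j.
Proof.
rewrite [RHS](reindex_esum [set: int] [set: int] (fun j => (j + t)%R)) //.
split.
- by move=> x.
- by move=> x y _ _ /addIr.
- by move=> y _; exists (y - t)%R => //; rewrite subrK.
Qed.

End EsumLemmas.

Lemma sq_sum_le (R : realFieldType) n (x : 'I_n -> R) :
  (\sum_(k < n) x k) ^+ 2 <= n%:R * \sum_(k < n) x k ^+ 2.
Proof.
set S := \sum_(k < n) x k; set Q := \sum_(k < n) x k ^+ 2.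
have h : 0 <= \sum_(k < n) \sum_(l < n) (x k - x l) ^+ 2.
  by apply: sumr_ge0 => k _; apply: sumr_ge0 => l _; apply: sqr_ge0.
have inner k : \sum_(l < n) (x k - x l) ^+ 2 = n%:R * x k ^+ 2 - (x k * S) *+ 2 + Q.
  under eq_bigr do rewrite sqrrB.
  rewrite big_split /= big_split /= sumrN sumr_const card_ord mulr_natl.
  by rewrite sumrMnl -mulr_sumr.
have e : \sum_(k < n) \sum_(l < n) (x k - x l) ^+ 2 = (n%:R * Q) *+ 2 - (S * S) *+ 2.
  under eq_bigr do rewrite inner.
  rewrite big_split /= big_split /= sumrN sumr_const card_ord -mulr_sumr.
  by rewrite sumrMnl -mulr_suml mulr_natl -/Q -/S !mulr2n addrAC.
move: h; rewrite e subr_ge0 expr2 => h.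
by rewrite -(ler_pMn2r (isT : (0 < 2)%N)).
Qed.

Lemma term_le_sum (R : realDomainType) (I : finType) (F : I -> R) i :
  (forall j, 0 <= F j) -> F i <= \sum_j F j.
Proof.
move=> F0; rewrite (bigD1 i) //= lerDl; apply: sumr_ge0 => j _; exact: F0.
Qed.

Section Ana.
Variable R : realType.
Variable q : nat.
Variable hq : (1 < q)%N.
Variables (c : 'I_q -> int) (M : 'M[R]_q) (s : 'I_q -> R) (eps : 'I_q -> R).
Local Notation N := (Nmax c).
Local Notation step := (lbm_step hq c M s eps).
Local Notation E := (Emx hq c M s eps).

Definition Bw (w : R) (m : int -> 'cV[R]_q) : \bar R :=
  \esum_(j in [set: int]) (w * nrm2 (m j))%:E.

Lemma nrm2_ge0 (v : 'cV[R]_q) : 0 <= nrm2 v.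
Proof. by apply: sumr_ge0 => i _; apply: sqr_ge0. Qed.

Definition cst (A : 'M[R]_q) : R := (q * q)%:R * \sum_a \sum_b A a b ^+ 2.

Lemma cst_ge0 A : 0 <= cst A.
Proof.
apply: mulr_ge0 => //; apply: sumr_ge0 => a _; apply: sumr_ge0 => b _; exact: sqr_ge0.
Qed.

Lemma nrm2_mul (A : 'M[R]_q) v : nrm2 (A *m v) <= cst A * nrm2 v.
Proof.
set mu := \sum_a \sum_b A a b ^+ 2.
have hmu a b : A a b ^+ 2 <= mu.
  have h1 : A a b ^+ 2 <= \sum_b A a b ^+ 2.
    have := (@term_le_sum R _ (fun b => A a b ^+ 2) b); apply; move=> j; exact: sqr_ge0.
  apply: (le_trans h1).
  have := (@term_le_sum R _ (fun a => \sum_b A a b ^+ 2) a); apply => a'.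
  by apply: sumr_ge0 => ? _; exact: sqr_ge0.
rewrite /nrm2 /cst natrM -/mu -mulrA.
have -> : q%:R * q%:R * (mu * \sum_(i < q) v i 0 ^+ 2) =
  \sum_(a < q) (q%:R * \sum_(b < q) mu * v b 0 ^+ 2).
  have nat_mul (x : R) : x *+ q = q%:R * x by rewrite mulr_natl.
  by rewrite [RHS]sumr_const card_ord [RHS]nat_mul -!mulr_sumr; ring.
apply: ler_sum => a _; rewrite mxE.
apply: le_trans (sq_sum_le (fun b => A a b * v b 0)) _.
rewrite ?card_ord; apply: ler_wpM2l => //; apply: ler_sum => b _.
by rewrite exprMn ler_wpM2r ?sqr_ge0 ?hmu.
Qed.

Lemma nrm2_sum n (v : 'I_n -> 'cV[R]_q) :
  nrm2 (\sum_(k < n) v k) <= n%:R * \sum_(k < n) nrm2 (v k).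
Proof.
rewrite /nrm2 exchange_big mulr_sumr /=; apply: ler_sum => a _.
rewrite summxE; exact: sq_sum_le.
Qed.

Definition K0 : R := ((N + N).+1)%:R * \sum_(k < (N + N).+1) cst (E (k%:Z - N%:Z)).

Lemma K0_ge0 : 0 <= K0.
Proof. apply: mulr_ge0 => //; apply: sumr_ge0 => k _; exact: cst_ge0. Qed.

Lemma step_pt m j : nrm2 (step m j) <=
  K0 * \sum_(k < (N + N).+1) nrm2 (m (j + (k%:Z - N%:Z))).
Proof.
apply: le_trans (nrm2_sum _) _.
rewrite /K0 -mulrA; apply: ler_wpM2l => //.
rewrite mulr_sumr; apply: ler_sum => k _.
apply: le_trans (nrm2_mul _ _) _; apply: ler_wpM2r; first exact: nrm2_ge0.
have := (@term_le_sum R _ (fun k : 'I_(N + N).+1 => cst (E (k%:Z - N%:Z))) k).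
apply => ?; exact: cst_ge0.
Qed.

Local Open Scope ereal_scope.

Lemma Bw_ge0 w m : (0 <= w)%R -> 0 <= Bw w m.
Proof.
move=> w0; apply: esum_ge0 => j _; rewrite lee_fin; apply: mulr_ge0 => //; exact: nrm2_ge0.
Qed.

Definition Kst : R := (K0 * ((N + N).+1)%:R)%R.

Lemma Kst_ge0 : (0 <= Kst)%R.
Proof. by apply: mulr_ge0 => //; exact: K0_ge0. Qed.

Lemma Bw_step w m : (0 <= w)%R -> Bw w (step m) <= Kst%:E * Bw w m.
Proof.
move=> w0.
apply: (@le_trans _ _ (\esum_(j in [set: int]) (K0%:E *
   \sum_(k < (N + N).+1) (w * nrm2 (m (j + (k%:Z - N%:Z)%R)))%:E))).
  apply: le_esum => j _; rewrite sumEFin -EFinM lee_fin.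
  rewrite -mulr_sumr mulrCA; apply: ler_wpM2l => //.
  exact: step_pt.
rewrite esumZ //; last 2 first; first exact: K0_ge0.
  by move=> j; apply: sume_ge0 => k _; rewrite lee_fin; apply: mulr_ge0 => //; exact: nrm2_ge0.
rewrite esum_sum; last first.
  by move=> j k _ _; rewrite lee_fin; apply: mulr_ge0 => //; exact: nrm2_ge0.
under eq_bigr do rewrite (esum_shift (fun j => (w * nrm2 (m j))%:E)).
rewrite sumr_const card_ord -[X in _ * X <= _]mule_natl muleA -EFinM.
by [].
Qed.

Lemma Bw_iter w m l : (0 <= w)%R ->
  Bw w (lbm_iter hq c M s eps l m) <= (Kst ^+ l)%:E * Bw w m.
Proof.
move=> w0; elim: l => [|l IH].
  by rewrite expr0 mul1e /lbm_iter.
rewrite /lbm_iter iterS.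
apply: le_trans (Bw_step _ w0) _.
rewrite exprS (EFinM Kst) -muleA; apply: lee_pmul => //. all: try (by rewrite lee_fin Kst_ge0). all: try (exact: Bw_ge0). all: try (by apply: mule_ge0; rewrite ?lee_fin ?Kst_ge0 //; exact: Bw_ge0).
Qed.

Lemma Bw_comp w m : (0 <= w)%R ->
  Bw w m = \sum_(b < q) \esum_(j in [set: int]) (w * (m j b 0) ^+ 2)%:E.
Proof.
move=> w0; rewrite /Bw -esum_sum; last first.
  by move=> j b _ _; rewrite lee_fin; apply: mulr_ge0 => //; exact: sqr_ge0.
by apply: eq_esum => j _; rewrite sumEFin /nrm2 mulr_sumr.
Qed.

Lemma comp_le (w : R) (m : int -> 'cV[R]_q) (b : 'I_q) : (0 <= w)%R ->
  \esum_(j in [set: int]) (w * (m j b 0) ^+ 2)%:E <= Bw w m.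
Proof.
move=> w0; rewrite (Bw_comp m w0) (bigD1 b) //= leeDl //.
apply: sume_ge0 => b' _; apply: esum_ge0 => j _; rewrite lee_fin.
by apply: mulr_ge0 => //; exact: sqr_ge0.
Qed.

End Ana.

Section Part1.
Variable R : realType.
Variable q' : nat.
Local Notation q := q'.+1.
Variable hq : (1 < q)%N.
Variables (c : 'I_q -> int) (M : 'M[R]_q) (s : 'I_q -> R) (eps : 'I_q -> R).
Local Notation iterl := (lbm_iter hq c M s eps).
Local Notation K := (Kst hq c M s eps).
Lemma KK_bound l : (l <= q)%N -> (K ^+ l <= (1 + K) ^+ q)%R.
Proof.
move=> hl; have K0 := Kst_ge0 hq c M s eps.
apply: (@le_trans _ _ ((1 + K) ^+ l)).
  apply: lerXn2r; rewrite ?nnegrE; lra.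
have h1 : (1 <= 1 + K)%R by lra.
exact: (ler_weXn2l h1 hl).
Qed.

Local Open Scope ereal_scope.

Lemma B_bound w m l : (0 <= w)%R -> (l <= q)%N ->
  Bw w (iterl l m) <= ((1 + K) ^+ q)%:E * Bw w m.
Proof.
move=> w0 hl; apply: le_trans (Bw_iter hq c M s eps m l w0) _.
apply: lee_wpmul2r; first exact: Bw_ge0.
by rewrite lee_fin KK_bound.
Qed.

Lemma part1 : lbm_hyps hq M s eps -> fd_L2_stable hq c M s eps ->
  lbm_L2_stable hq c M s eps.
Proof.
move=> [_ _ he] [C [C0 HC]].
set S := snum hq s.
set p0 := (q - S.+1)%N.
set KK := ((1 + K) ^+ q)%R.
have K0 := Kst_ge0 hq c M s eps.
have KK1 : (1 <= KK)%R by apply: exprn_ege1; lra.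
have hSq : (S.+1 <= q)%N by apply: snum_lt.
exists (KK * (1 + C * (q * S.+1)%:R))%R; split.
  apply: mulr_gt0; first lra.
  have : (0 <= C * (q * S.+1)%:R)%R by apply: mulr_ge0 => //; lra.
  lra.
move=> dx dx0 m0 hm0 n.
change (Bw dx (iterl n m0) <= (KK * (1 + C * (q * S.+1)%:R))%:E * Bw dx m0).
have dx0' : (0 <= dx)%R by lra.
have X0 : 0 <= Bw dx m0 by apply: Bw_ge0.
have B1fin : Bw 1 m0 < +oo.
  apply: le_lt_trans hm0; rewrite /Bw.
  by apply: le_esum => j _; rewrite mul1r.
have B1fin' : Bw 1 m0 \is a fin_num.
  rewrite ge0_fin_numE //; apply: Bw_ge0; lra.
case: (ltnP n p0) => hn.
  apply: le_trans (B_bound m0 dx0' _) _; first lia.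
  apply: lee_wpmul2r => //; rewrite lee_fin.
  have : (0 <= C * (q * S.+1)%:R)%R by apply: mulr_ge0 => //; lra.
  move=> h; rewrite -[X in (X <= _)%R]mulr1; apply: ler_wpM2l; [apply: exprn_ge0; lra | lra].
have hcomp (b : 'I_q) : \esum_(j in [set: int]) (dx * (iterl n m0 j b 0%R) ^+ 2)%:E <=
    (C * S.+1%:R * KK)%:E * Bw dx m0.
  pose u := fun (k : nat) (j : int) => iterl (k + p0) m0 j b 0%R.
  have hsol : fd_solution hq c M s eps u.
    move=> k hk j; rewrite /u.
    have e1 : (k.+1 + p0 = q + (k - S))%N by rewrite /p0; lia.
    rewrite e1 /lbm_iter iterD.
    have := @rec_fd R q' hq c M s eps (iter (k - S) (lbm_step hq c M s eps) m0) b j he.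
    rewrite /mcomp /lbm_iter => ->; f_equal; apply: eq_bigr => l _.
    rewrite -iterD.
    have hl := ltn_ord l.
    have -> : (q - l - 1 + (k - S) = k - l + p0)%N by rewrite /p0; lia.
    by [].
  have hl2 : forall l, (l <= S)%N -> l2_sc (u l).
    move=> l hl; rewrite /l2_sc.
    apply: le_lt_trans (_ : _ <= Bw 1 (iterl (l + p0) m0)) _.
      apply: le_trans (comp_le (iterl (l + p0) m0) b _) ; last lra.
      by apply: le_esum => j _; rewrite mul1r.
    apply: le_lt_trans (B_bound m0 _ _) _; [lra | rewrite /p0; lia |].
    apply: lte_mul_pinfty => //; rewrite lee_fin; apply: exprn_ge0; lra.
  have := HC dx dx0 u hl2 hsol (n - p0)%N.
  rewrite /u subnK //.
  move=> h; apply: le_trans h _.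
  apply: le_trans (_ : _ <= C%:E * \sum_(l < S.+1) (KK%:E * Bw dx m0)) _.
    apply: lee_wpmul2l; first by rewrite lee_fin; lra.
    apply: lee_sum => l _.
    apply: le_trans (comp_le (iterl (l + p0) m0) b dx0') _.
    apply: B_bound => //; have := ltn_ord l; rewrite /p0; lia.
  rewrite sumr_const card_ord -[X in C%:E * X]mule_natl !muleA -!EFinM.
  by rewrite [(C * _ * _)%R]mulrC mulrA.
rewrite (Bw_comp _ dx0').
apply: le_trans (_ : _ <= \sum_(b < q) ((C * S.+1%:R * KK)%:E * Bw dx m0)) _.
  by apply: lee_sum => b _; apply: hcomp.
rewrite sumr_const card_ord -[X in X <= _]mule_natl muleA -EFinM.
apply: lee_wpmul2r => //; rewrite lee_fin.
have : (0 <= C * (q * S.+1)%:R)%R by apply: mulr_ge0 => //; lra.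
rewrite natrM; move=> h.
have -> : (q%:R * (C * S.+1%:R * KK) = KK * (C * (q%:R * S.+1%:R)))%R by ring.
apply: ler_wpM2l; lra.
Qed.

End Part1.

Section Example.
Variable R : realType.
Definition hq3 : (1 < 3)%N := erefl.
Definition c3 : 'I_3 -> int := fun _ => 0.
Definition M3 : 'M[R]_3 := 1%:M.
Definition s3 : 'I_3 -> R := fun _ => 2.
Definition eps3 : 'I_3 -> R := fun i => (i == i0 hq3)%:R.
Definition d3 : 'rV[R]_3 := \row_i (if i == i0 hq3 then 1 else -1).

Lemma hyps3 : lbm_hyps hq3 M3 s3 eps3.
Proof.
split; first exact: unitmx1.
  by move=> i _; rewrite /s3; apply/andP; split => //; lra.
by rewrite /eps3 eqxx.
Qed.

Lemma K3 : Kmx hq3 s3 eps3 = diag_mx d3.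
Proof.
apply/matrixP => a b; rewrite KmxE !mxE /s3 /eps3.
case: (a =P b) => [<-|nab].
  by case: (a == i0 hq3); rewrite /= ?eqxx; lra.
case: (a =P i0 hq3) => [ea|na]; last by rewrite /= mul0r; lra.
have -> : (b == i0 hq3) = false by apply/eqP => eb; apply: nab; rewrite ea eb.
by rewrite /=; lra.
Qed.

Lemma N3 : Nmax c3 = 0%N.
Proof. by rewrite /Nmax big1. Qed.

Lemma E3 : Emx hq3 c3 M3 s3 eps3 0 = diag_mx d3.
Proof.
rewrite /Emx -K3 /M3 invmx1 -mulmx_suml.
rewrite (eq_bigl (fun _ => true)); last by move=> i; rewrite /c3 oppr0 eqxx.
under eq_bigr do rewrite mul1mx mulmx1.
by rewrite -mx1_sum_delta mul1mx.
Qed.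

Lemma step3 m j : lbm_step hq3 c3 M3 s3 eps3 m j = diag_mx d3 *m m j.
Proof.
by rewrite /lbm_step N3 big_ord1 /= subrr addr0 E3.
Qed.

Lemma nrm2_d3 v : nrm2 (diag_mx d3 *m v) = nrm2 v.
Proof.
apply: eq_bigr => i _; rewrite mul_diag_mx !mxE.
by case: (i == i0 hq3); rewrite ?mul1r ?mulN1r ?sqrrN.
Qed.

Lemma iter3 n m j : nrm2 (lbm_iter hq3 c3 M3 s3 eps3 n m j) = nrm2 (m j).
Proof.
elim: n m j => [|n IH] m j //.
by rewrite /lbm_iter iterS step3 nrm2_d3 IH.
Qed.

Lemma lbm3 : lbm_L2_stable hq3 c3 M3 s3 eps3.
Proof.
exists 1; split => // dx dx0 m0 _ n.
rewrite mul1e le_eqVlt; apply/orP; left; apply/eqP.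
by apply: eq_esum => j _; rewrite iter3.
Qed.


Lemma snum3 : snum hq3 s3 = 2%N.
Proof.
rewrite /snum (_ : [set i | _] = [set~ i0 hq3]) ?cardsC1 ?card_ord //.
by apply/setP => i; rewrite !inE /s3 pnatr_eq1 andbT.
Qed.

Lemma Ptil3 : Ptil hq3 c3 M3 s3 eps3 = map_mx polyC (diag_mx d3).
Proof. by rewrite /Ptil N3 big_ord1 expr0 scale1r subrr E3. Qed.

Definition P3 : {poly R} := 'X^3 + 'X^2 - 'X - 1.

Lemma chi3 : char_poly (diag_mx d3) = P3.
Proof.
rewrite char_poly_trig ?diag_mx_is_trig // !big_ord_recr big_ord0 /= !mxE /=.
rewrite polyCN polyC1 /P3; ring.
Qed.

Lemma acoef3 l : acoef hq3 c3 M3 s3 eps3 l = (P3`_l)%:P.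
Proof.
by rewrite /acoef Ptil3 -map_char_poly coef_map chi3.
Qed.

Lemma gam3 l u j : gammaT hq3 c3 M3 s3 eps3 l u j = P3`_l * u j.
Proof.
rewrite /gammaT acoef3 N3 size_polyC.
case: (P3`_l =P 0) => [->|nz] /=; first by rewrite big_ord0 mul0r.
rewrite big_ord1 coefC /=; congr (_ * u _); rewrite mul0n; lia.
Qed.

Lemma P3c2 : P3`_2 = 1.
Proof. rewrite /P3 !(coefD, coefB, coefXn, coefX, coef1, coefN) /=; lra. Qed.
Lemma P3c1 : P3`_1 = -1.
Proof. by rewrite /P3 !(coefD, coefB, coefXn, coefX, coef1, coefN) /=; lra. Qed.
Lemma P3c0 : P3`_0 = -1.
Proof. by rewrite /P3 !(coefD, coefB, coefXn, coefX, coef1, coefN) /=; lra. Qed.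

Definition u3 (n : nat) (j : int) : R := if j == 0 then (-1) ^+ n * n%:R else 0.

Lemma sol3 : fd_solution hq3 c3 M3 s3 eps3 u3.
Proof.
rewrite /fd_solution snum3 => n hn j.
rewrite !big_ord_recr big_ord0 /= !gam3 /= P3c2 P3c1 P3c0 /u3.
case: (j == 0); last by rewrite !mulr0 !addr0 oppr0.
case: n hn => [|[|k]] // _.
rewrite !subSS !subn0 !exprS !mulrS; ring.
Qed.


Lemma esum_single (f : int -> R) : (forall j, j != 0 -> f j = 0) -> (forall j, 0 <= f j) ->
  (\esum_(j in [set: int]) (f j)%:E = (f 0)%:E)%E.
Proof.
move=> f0 fge.
rewrite (esumID [set 0]); last by move=> i _; rewrite lee_fin.
rewrite [X in (_ + X)%E]esum1 ?adde0; last first.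
  by move=> i [_ /= ni]; rewrite f0 //; apply/eqP.
by rewrite setTI esum_set1 // lee_fin.
Qed.

Lemma u3sq n j : (u3 n j) ^+ 2 = if j == 0 then n%:R ^+ 2 else 0.
Proof.
rewrite /u3; case: (j == 0); last by rewrite expr0n.
by rewrite exprMn exprAC sqrrN expr1n expr1n mul1r.
Qed.

Lemma esum_u3 n : (\esum_(j in [set: int]) (1 * u3 n j ^+ 2)%:E = (n%:R ^+ 2)%:E)%E.
Proof.
rewrite (esum_single (f := fun j => 1 * u3 n j ^+ 2)).
- by rewrite mul1r u3sq eqxx.
- by move=> j nj; rewrite u3sq (negbTE nj) mulr0.
- by move=> j; rewrite mul1r sqr_ge0.
Qed.

Lemma fd3 : ~ fd_L2_stable hq3 c3 M3 s3 eps3.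
Proof.
move=> [C [C0 HC]].
have hl2 : forall l, (l <= snum hq3 s3)%N -> l2_sc (u3 l).
  move=> l _; rewrite /l2_sc.
  rewrite (_ : (\esum_(j in [set: int]) (u3 l j ^+ 2)%:E)%E = (\esum_(j in [set: int]) (1 * u3 l j ^+ 2)%:E)%E).
    by rewrite esum_u3 ltry.
  by apply: eq_esum => j _; rewrite mul1r.
set n := Num.Def.archi_bound (5 * C).
have hn : 5 * C < n%:R by apply: archi_boundP; lra.
have := HC 1 ltr01 u3 hl2 sol3 n.
rewrite esum_u3 snum3 !big_ord_recr big_ord0 /= !esum_u3 !add0e -!EFinD -EFinM lee_fin.
have n1 : 1 <= (n%:R : R).
  have : (0 < n)%N by rewrite -(ltr0n R); lra.
  by rewrite -(ler_nat R).
have : (n%:R : R) <= n%:R ^+ 2 by rewrite expr2 ler_peMl //; lra.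
lra.
Qed.

End Example.

Theorem mainTheorem1 (R : realType) :
  (forall (q : nat) (hq : (1 < q)%N) (c : 'I_q -> int) (M : 'M[R]_q)
          (s eps : 'I_q -> R),
      lbm_hyps hq M s eps ->
      fd_L2_stable hq c M s eps -> lbm_L2_stable hq c M s eps)
  /\
  (exists (q : nat) (hq : (1 < q)%N) (c : 'I_q -> int) (M : 'M[R]_q)
          (s eps : 'I_q -> R),
      [/\ lbm_hyps hq M s eps, lbm_L2_stable hq c M s eps &
          ~ fd_L2_stable hq c M s eps]).
Proof.
split.
  case=> [|q'] hq c M s eps; first by [].
  exact: part1.
exists 3%N, hq3, c3, (M3 R), (s3 R), (eps3 R); split.
- exact: hyps3.
- exact: lbm3.
- exact: fd3.
Qed.
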